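(* Let $\mathbf m\in\mathbb C^d$ with $\operatorname{supp}(\mathbf m)\subseteq[\delta]_0$, where $2\delta-1\le d$, so that $\mathbf m=(a_0e^{i\theta_0},\dots,a_{\delta-1}e^{i\theta_{\delta-1}},0,\dots,0)^T$ with $a_j,\theta_j\in\mathbb R$. Let $1\le\gamma\le2\delta-1$ and $$\mu_2=\min_{|p|\le\gamma-1,\ |q|\le\delta-1}\left|\left(F_d(\widehat{\mathbf m}\circ S_p\overline{\widehat{\mathbf m}})\right)_q\right|.$$ If $|a_0|>(\delta-1)|a_1|$ and $|a_1|\ge|a_2|\ge\cdots\ge|a_{\delta-1}|>0$, then $\mu_2>0$.
   Context: Vectors in $\mathbb C^d$ are indexed by $[d]_0=\{0,1,\dots,d-1\}$, with all indices interpreted modulo $d$. $F_d$ is the DFT matrix $(F_d)_{j,k}=e^{-2\pi i jk/d}$ and $\widehat{\mathbf m}=F_d\mathbf m$. The shift is $(S_p\mathbf x)_n=x_{n+p}$; $\circ$ is the entrywise product and $\overline{\mathbf x}$ the entrywise conjugate; $\operatorname{supp}(\mathbf x)=\{n:x_n\neq0\}$. *)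

(* Defs.v *)
From HB Require Import structures.
From mathcomp Require Import all_boot all_order all_algebra all_field.
Set Implicit Arguments. Unset Strict Implicit. Unset Printing Implicit Defensive.
Import Order.TTheory GRing.Theory Num.Theory.
Local Open Scope ring_scope.

Definition vec (d : nat) := 'I_d -> algC.

Definition vget (d : nat) (x : vec d) (k : int) : algC :=
  match @insub nat (fun n => n < d)%N _ (absz (k %% d%:Z)%Z) with
  | Some i => x i
  | None => 0
  end.

(* omega d = e^{-2 pi i / d}: d.-root (-1) is e^{i pi / d} (minimal argument) *)
Definition omega (d : nat) : algC := ((d.-root (-1)) ^+ 2)^-1.

Definition dft (d : nat) (x : vec d) : vec d :=
  fun j => \sum_(k < d) omega d ^+ (j * k) * x k.

Definition shift (d : nat) (p : int) (x : vec d) : vec d :=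
  fun n => vget x (n%:Z + p).

Definition conjv (d : nat) (x : vec d) : vec d := fun n => (x n)^*.

Definition hadamard (d : nat) (x y : vec d) : vec d := fun n => x n * y n.

(* the integers -(n-1), ..., n-1 *)
Definition zrange (n : nat) : seq int :=
  [seq (k%:Z - (n.-1)%:Z) | k <- iota 0 (n.-1).*2.+1].

Definition mu2_term (d : nat) (m : vec d) (p q : int) : algC :=
  `| vget (dft (hadamard (dft m) (shift p (conjv (dft m))))) q |.

(* mu_2 = min over |p| <= gamma-1, |q| <= delta-1 of the terms
   (the seed value mu2_term m 0 0 is itself one of the terms) *)
Definition mu2 (d delta gamma : nat) (m : vec d) : algC :=
  \big[Num.min/mu2_term m 0 0]_(p <- zrange gamma)
    \big[Num.min/mu2_term m 0 0]_(q <- zrange delta) mu2_term m p q.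

(* Main.v *)
Require Import Defs.
From HB Require Import structures.
From mathcomp Require Import all_boot all_order all_algebra all_field.
From mathcomp Require Import zify ring.
Import Order.TTheory GRing.Theory Num.Theory.
Set Implicit Arguments. Unset Strict Implicit. Unset Printing Implicit Defensive.
Local Open Scope ring_scope.

Lemma norm_unity (z : algC) n : (0 < n)%N -> z ^+ n = 1 -> `|z| = 1.
Proof.
move=> n0 zn; apply/eqP; rewrite -(pexpr_eq1 n0 (normr_ge0 z)) -normrX zn normr1 //.
Qed.

Lemma unity_neq0 (z : algC) n : (0 < n)%N -> z ^+ n = 1 -> z != 0.
Proof.
move=> n0 zn; apply/eqP=> z0; move: zn; rewrite z0 expr0n; case: n n0 => //= n _.
by move/eqP; rewrite eq_sym oner_eq0.
Qed.

Lemma conj_unity (z : algC) n : (0 < n)%N -> z ^+ n = 1 -> z^* = z ^+ n.-1.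
Proof.
move=> n0 zn; have nz := norm_unity n0 zn; have z0 := unity_neq0 n0 zn.
have -> : z^* = z^-1 by rewrite invC_norm nz expr1n invr1 mul1r.
apply: (mulfI z0); rewrite mulfV // -exprS prednK //.
Qed.

Lemma sum_unity (z : algC) n e : n.-primitive_root z ->
  \sum_(j < n) z ^+ (j * e) = if (n %| e)%N then n%:R else 0.
Proof.
move=> pz; have n0 := prim_order_gt0 pz.
rewrite (prim_order_dvd pz); under eq_bigr => j _ do rewrite mulnC exprM.
case: eqP => [->|/eqP ne1].
  by under eq_bigr => j _ do rewrite expr1n; rewrite sumr_const card_ord.
have : (z ^+ e - 1) * \sum_(j < n) (z ^+ e) ^+ j = 0.
  by rewrite -subrX1 -exprM mulnC exprM (prim_expr_order pz) expr1n subrr.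
by move/eqP; rewrite mulf_eq0 subr_eq0 (negPf ne1) /= => /eqP.
Qed.

Lemma dvd_diag (s a b : nat) : (a < s)%N -> (b < s)%N ->
  (s %| a + s.-1 * b)%N = (a == b).
Proof.
case: s => // s' ha hb /=; apply/idP/eqP => [/dvdnP [q hq]|->].
  have e1 : (a + s'.+1 * b = q * s'.+1 + b)%N by rewrite -hq; nia.
  have : ((a + s'.+1 * b) %% s'.+1 = (q * s'.+1 + b) %% s'.+1)%N by rewrite e1.
  by rewrite modnMDl addnC mulnC modnMDl !modn_small.
have -> : (b + s' * b = b * s'.+1)%N by nia.
exact: dvdn_mull.
Qed.

Lemma norm1_conj (r : algC) : `|r| = 1 -> r^* = r^-1.
Proof. by move=> h; rewrite invC_norm h expr1n invr1 mul1r. Qed.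

Lemma fejer (s : nat) (r eta : algC) : `|r| = 1 -> s.-primitive_root eta ->
  \sum_(j < s) (\sum_(a < s) (r * eta ^+ j) ^+ a) *
     (\sum_(a < s) (r * eta ^+ j) ^+ a)^* = (s * s)%:R.
Proof.
move=> nr pe; have s0 := prim_order_gt0 pe.
have r0 : r != 0 by rewrite -normr_eq0 nr oner_eq0.
have ec : eta^* = eta ^+ s.-1 := conj_unity s0 (prim_expr_order pe).
have rc := norm1_conj nr.
have term : forall (j a b : nat), (r * eta ^+ j) ^+ a * ((r * eta ^+ j) ^+ b)^* =
    (r ^+ a * r ^- b) * eta ^+ (j * (a + s.-1 * b)).
  move=> j a b; rewrite rmorphXn rmorphM rmorphXn /= rc ec !exprMn exprVn -!exprM.
  rewrite mulnDr exprD mulrACA; congr (_ * (_ * _)); congr (_ ^+ _); lia.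
have e1 : forall j : 'I_s, (\sum_(a < s) (r * eta ^+ j) ^+ a) *
     (\sum_(a < s) (r * eta ^+ j) ^+ a)^* = \sum_(a < s) \sum_(b < s)
    (r ^+ a * r ^- b) * eta ^+ (j * (a + s.-1 * b)).
  move=> j; rewrite rmorph_sum mulr_suml; apply: eq_bigr => a _.
  by rewrite mulr_sumr; apply: eq_bigr => b _; rewrite term.
rewrite (eq_bigr _ (fun j _ => e1 j)).
rewrite exchange_big /=; under eq_bigr => a _ do rewrite exchange_big /=.
under eq_bigr => a _ do under eq_bigr => b _ do rewrite -mulr_sumr sum_unity //.
have -> : (s * s)%:R = \sum_(a < s) (s%:R : algC).
  by rewrite sumr_const card_ord natrM mulr_natr.
apply: eq_bigr => a _; rewrite (bigD1 a) //= big1 => [|b /negPf hb].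
  by rewrite dvd_diag // eqxx addr0 mulfV ?mul1r // expf_neq0.
rewrite dvd_diag //.
have -> : (a == b :> nat) = false by rewrite eq_sym; exact: hb.
by rewrite mulr0.
Qed.

Lemma m1n1 : (-1 : algC) != 1.
Proof.
apply/eqP => h; have : (2%:R : algC) = 0 by rewrite mulr2n -[X in 1 + X]h subrr.
by move/eqP; rewrite pnatr_eq0.
Qed.

Lemma normsub1 (z : algC) : `|z| = 1 -> `|z - 1| ^+ 2 = 2 - 2 * 'Re z.
Proof.
move=> nz; have h : z * z^* = 1 by rewrite -normCK nz expr1n.
have e : 2 * 'Re z = z + z^* by rewrite ReE mulrC divfK // pnatr_eq0.
rewrite normCK rmorphB rmorph1 e.
transitivity (z * z^* - z - z^* + 1); first ring.
by rewrite h; ring.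
Qed.

Lemma root_contra (d k s : nat) : (2 < s)%N -> d = (s * k)%N -> (0 < k)%N ->
  (d.-root (-1 : algC)) ^+ k = -1 -> False.
Proof.
move=> s2 dsk k0 yk; set y := d.-root (-1 : algC) in yk *.
have s0 : (0 < s)%N by lia.
have d0 : (0 < d)%N by rewrite dsk muln_gt0 s0.
have y2k : y ^+ (k * 2) = 1 by rewrite exprM yk sqrrN expr1n.
have k20 : (0 < k * 2)%N by lia.
have ny : `|y| = 1 := norm_unity k20 y2k.
set r := s.-root y; have rs : r ^+ s = y := rootCK s0 y.
have nr : `|r| = 1.
  by apply/eqP; rewrite -(pexpr_eq1 s0 (normr_ge0 r)) -normrX rs ny.
have [eta pe] := C_prim_root_exists s0.
have F := fejer nr pe.
set G := fun z : algC => \sum_(a < s) z ^+ a.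
have /existsP [j hj] : [exists j : 'I_s, (s%:R : algC) <= G (r * eta ^+ j) * (G (r * eta ^+ j))^*].
  case: (boolP [exists j : 'I_s, (s%:R : algC) <= G (r * eta ^+ j) * (G (r * eta ^+ j))^*]) => // /existsPn H; exfalso.
  have : \sum_(j < s) G (r * eta ^+ j) * (G (r * eta ^+ j))^* < \sum_(j < s) (s%:R : algC).
    apply: ltr_sum; first by apply/hasP; exists (Ordinal s0); rewrite ?mem_index_enum.
    by move=> i _; have := H i; rewrite -normCK real_leNgt ?realn ?rpredX ?normr_real //; rewrite negbK.
  by rewrite /G /= F sumr_const card_ord natrM mulr_natr ltxx.
set w := r * eta ^+ j in hj.
have hw : w ^+ s = y.
  by rewrite /w exprMn rs -exprM mulnC exprM (prim_expr_order pe) expr1n mulr1.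
have nw : `|w| = 1.
  by rewrite /w normrM nr normrX (norm_unity s0 (prim_expr_order pe)) expr1n mulr1.
have hG : (w - 1) * G w = y - 1 by rewrite /G -subrX1 hw.
have hB : `|w - 1| ^+ 2 * (G w * (G w)^*) = `|y - 1| ^+ 2.
  by rewrite -normCK -exprMn -normrM hG.
have yn1 : y != 1.
  by apply/eqP => y1; move: yk; rewrite y1 expr1n => /eqP; rewrite eq_sym (negPf m1n1).
have B0 : 0 < `|y - 1| ^+ 2 by rewrite exprn_gt0 // normr_gt0 subr_eq0.
have AB : `|w - 1| ^+ 2 < `|y - 1| ^+ 2.
  have [A0|A0] := eqVneq (`|w - 1| ^+ 2) 0; first by rewrite A0.
  have Ap : 0 < `|w - 1| ^+ 2 by rewrite lt0r A0 exprn_ge0.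
  rewrite -hB ltr_pMr //; apply: lt_le_trans hj; rewrite ltr1n; lia.
rewrite (normsub1 nw) (normsub1 ny) ltrD2l ltrN2 ltr_pM2l // in AB.
have hwd : w ^+ d = -1 by rewrite dsk exprM hw.
have [Im0|Im0] := boolP (0 <= 'Im w).
  have := rootC_Re_max d0 hwd Im0; rewrite -/y.
  by move=> h; have := lt_le_trans AB h; rewrite ltxx.
have Im0' : 0 <= 'Im w^*.
  rewrite Im_conj oppr_ge0; apply: ltW; rewrite real_ltNge //; exact: Creal_Im.
have hwd' : w^* ^+ d = -1 by rewrite -rmorphXn hwd rmorphN1.
have := rootC_Re_max d0 hwd' Im0'; rewrite -/y Re_conj.
by move=> h; have := lt_le_trans AB h; rewrite ltxx.
Qed.

Lemma inv_unity (z : algC) n : (0 < n)%N -> z ^+ n = 1 -> z^-1 = z ^+ n.-1.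
Proof.
move=> n0 zn; have z0 := unity_neq0 n0 zn.
by apply: (mulfI z0); rewrite mulfV // -exprS prednK.
Qed.

Lemma omega_prim d : (0 < d)%N -> d.-primitive_root (omega d).
Proof.
move=> d0; set y := d.-root (-1 : algC).
have yd : y ^+ d = -1 by rewrite /y rootCK.
have y2d : (y ^+ 2) ^+ d = 1 by rewrite -exprM mulnC exprM yd sqrrN expr1n.
have [k pk kd] := prim_order_exists d0 y2d.
have k0 := prim_order_gt0 pk.
have dk : d = (divn d k * k)%N by rewrite divnK.
have pd : d.-primitive_root (y ^+ 2).
  suff e : k = d by rewrite -e.
  move: dk; set s := divn d k => dk.
  have [so|se] := boolP (odd s).
    have [s1|s2] : s = 1%N \/ (2 < s)%N.
      have sn0 : s <> 0%N by move=> h; move: dk d0; rewrite h mul0n => ->.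
      have sn2 : s <> 2%N by move=> h; move: so; rewrite h.
      lia.
      by rewrite dk s1 mul1n.
    exfalso; set c := y ^+ k.
    have c2 : c ^+ 2 = 1 by rewrite -exprM mulnC exprM (prim_expr_order pk).
    have cs : c ^+ s = -1 by rewrite -exprM mulnC -dk yd.
    move/eqP: c2; rewrite sqrf_eq1 => /orP [/eqP c1|/eqP c1].
      by move: cs; rewrite c1 expr1n => /eqP; rewrite eq_sym (negPf m1n1).
    exact: (root_contra s2 dk k0 c1).
  exfalso; have e2 : s = (s./2 * 2)%N by rewrite -{1}(odd_double_half s) (negPf se) -muln2.
  move: yd; rewrite dk e2 -mulnA mulnC exprM exprM (prim_expr_order pk) expr1n.
  by move/eqP; rewrite eq_sym (negPf m1n1).
rewrite /omega -/y (inv_unity d0 y2d) prim_root_exp_coprime //.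
by clear -d0; case: d d0 => // n _ /=; exact: coprimenS.
Qed.

Definition omod (d : nat) (d0 : (0 < d)%N) (n : nat) : 'I_d := Ordinal (ltn_pmod n d0).

Lemma vgetE d (x : vec d) (k : int) (i : 'I_d) : (k %% d)%Z = (val i)%:Z -> vget x k = x i.
Proof.
rewrite /vget => ->; case: insubP => [j _ hj|]; first by congr x; apply: val_inj.
by rewrite /= ltn_ord.
Qed.

Lemma vget_nat d (d0 : (0 < d)%N) (x : vec d) (n : nat) : vget x n%:Z = x (omod d0 n).
Proof. by apply: vgetE; rewrite modz_nat. Qed.

Lemma dvd_shift (d X l : nat) : (l < d)%N -> (d %| X + d.-1 * l)%N = (l == (X %% d)%N).
Proof.
move=> ld; have d0 : (0 < d)%N by lia.
rewrite /dvdn -modnDml -/(dvdn d _) dvd_diag ?ltn_pmod // eq_sym.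
Qed.

Lemma modz_abs d (d0 : (0 < d)%N) (z : int) :
  (z %% d)%Z = (absz (z %% d)%Z)%:Z /\ (absz (z %% d)%Z < d)%N.
Proof.
have dn0 : (d%:Z != 0) by rewrite eqz_nat -lt0n.
have h : (z %% d)%Z = (absz (z %% d)%Z)%:Z by rewrite gez0_abs // modz_ge0.
split=> //; have := ltz_pmod z (d0 : (0 < d%:Z)); rewrite h ltz_nat //.
Qed.

Lemma dft_id d (d0 : (0 < d)%N) (m : vec d) (p q : int) :
  vget (dft (hadamard (dft m) (shift p (conjv (dft m))))) q =
  d%:R * \sum_(k < d) m k * (m (omod d0 (absz (q %% d)%Z + k)))^* *
     omega d ^+ (d.-1 * absz (p %% d)%Z * ((absz (q %% d)%Z + k) %% d)).
Proof.
set w := omega d; have pw := omega_prim d0.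
have wc : w^* = w ^+ d.-1 := conj_unity d0 (prim_expr_order pw).
have [hq HQ] := modz_abs d0 q; have [hp HP] := modz_abs d0 p.
set P := absz (p %% d)%Z in hp HP *; set Q := absz (q %% d)%Z in hq HQ *.
rewrite (@vgetE _ _ q (Ordinal HQ)) //.
have hv : forall n : 'I_d, vget (conjv (dft m)) (n%:Z + p) =
    (\sum_(l < d) w ^+ ((n + P) * l) * m l)^*.
  move=> n; rewrite (@vgetE _ _ _ (omod d0 (n + P))) /conjv /dft; last first.
    by rewrite /= -modzDmr hp -modz_nat.
  congr (_^*); apply: eq_bigr => l _ /=.
  by rewrite -/w exprM (prim_expr_mod pw) -exprM.
transitivity (\sum_(n < d) \sum_(k < d) \sum_(l < d)
   (m k * (m l)^* * w ^+ (d.-1 * P * l)) * w ^+ (n * (Q + k + d.-1 * l))).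
  rewrite /dft /hadamard /shift /=; apply: eq_bigr => n _; rewrite hv.
  rewrite rmorph_sum /= mulr_suml mulr_sumr; apply: eq_bigr => k _.
  rewrite mulr_sumr mulr_sumr; apply: eq_bigr => l _.
  rewrite rmorphM rmorphXn /= wc -exprM.
  have e : (Q * n + n * k + d.-1 * ((n + P) * l) =
            d.-1 * P * l + n * (Q + k + d.-1 * l))%N by nia.
  transitivity (m k * (m l)^* * (w ^+ (Q * n) * w ^+ (n * k) * w ^+ (d.-1 * ((n + P) * l)))).
    by rewrite -/w; ring.
  by rewrite -!exprD e exprD mulrA.
rewrite exchange_big /=; under eq_bigr => k _ do rewrite exchange_big /=.
under eq_bigr => k _ do under eq_bigr => l _ do rewrite -mulr_sumr sum_unity //.
rewrite mulr_sumr; apply: eq_bigr => k _.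
rewrite (bigD1 (omod d0 (Q + k))) //= big1 => [|l hl]; last first.
  rewrite dvd_shift //.
  have -> : (l == ((Q + k) %% d)%N :> nat) = false.
    by apply/negbTE; apply: contra hl => /eqP h; apply/eqP/val_inj.
  by rewrite mulr0.
by rewrite dvd_shift ?ltn_pmod // eqxx addr0 mulrC.
Qed.

Lemma sum_ind_const d dl (A : algC) : (dl <= d)%N ->
  \sum_(k < d) (if (k < dl)%N then A else 0) = dl%:R * A.
Proof.
move=> hd; rewrite -(big_mkord xpredT (fun k => if (k < dl)%N then A else 0)).
rewrite (big_cat_nat (leq0n dl) hd) /=.
rewrite [X in X + _]big_nat_cond (eq_bigr (fun _ => A)) => [|k /andP[/andP[_ ->]]] //.
rewrite -big_nat_cond sumr_const_nat subn0 mulr_natl.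
rewrite [X in _ + X]big_nat_cond big1 ?addr0 // => k /andP[/andP[h _] _].
by rewrite ltnNge h.
Qed.

Lemma sum_ne0 d dl (x : 'I_d -> algC) (A : algC) (k0 : 'I_d) :
  (dl <= d)%N -> (k0 < dl)%N -> 0 <= A -> (dl.-1)%:R * A < `|x k0| ->
  (forall k : 'I_d, k != k0 -> `|x k| <= (if (k < dl)%N then A else 0)) ->
  \sum_(k < d) x k != 0.
Proof.
move=> hd hk A0 hA hx; apply/eqP => hs.
move: hs; rewrite (bigD1 k0) //= => /eqP; rewrite addr_eq0 => /eqP hs.
have h1 : `|x k0| <= \sum_(k < d | k != k0) (if (k < dl)%N then A else 0).
  rewrite hs normrN; apply: le_trans (ler_norm_sum _ _ _) _.
  by apply: ler_sum => k hk'; apply: hx.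
have := sum_ind_const A hd; rewrite (bigD1 k0) //= hk => h2.
have h3 : \sum_(k < d | k != k0) (if (k < dl)%N then A else 0) = (dl.-1)%:R * A.
  apply: (addrI A); rewrite h2; case: dl hd hk {hA hx h1 h2} => // dl' _ _ /=.
  by rewrite -[dl'.+1]addn1 natrD mulrDl mul1r addrC.
by move: (lt_le_trans hA h1); rewrite h3 ltxx.
Qed.

Lemma core d dl (m : vec d) (p : int) (k' : nat) (d0 : (0 < d)%N) :
  (1 <= dl)%N -> (dl.*2.-1 <= d)%N -> (k' <= (dl.-1).*2)%N ->
  (forall i : 'I_d, (dl <= i)%N -> m i = 0) ->
  `|vget m 0| > (dl.-1)%:R * `|vget m 1| ->
  (forall j : nat, (1 <= j)%N -> (j.+1 <= dl.-1)%N ->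
      `|vget m j.+1%:Z| <= `|vget m j%:Z|) ->
  `|vget m (dl.-1)%:Z| > 0 ->
  0 < mu2_term m p (k'%:Z - (dl.-1)%:Z).
Proof.
move=> dl1 hd hk' hsupp h0 hmono hlast.
have dld : (dl <= d)%N by lia.
set a := fun j : nat => `|vget m j%:Z|.
have aO : forall n, `|m (omod d0 n)| = a n by move=> n; rewrite /a vget_nat.
have aE : forall k : 'I_d, `|m k| = a k.
  move=> k; rewrite -aO; congr (`|m _|); apply: val_inj; rewrite /= modn_small //.
have amod : forall j, a j = a (j %% d)%N.
  move=> j; rewrite -!aO; congr (`|m _|); apply: val_inj; rewrite /= modn_mod //.
have aZ : forall j, (dl <= j %% d)%N -> a j = 0.
  by move=> j hj; rewrite -aO hsupp ?normr0.
have ag0 : forall j, 0 <= a j by move=> j; exact: normr_ge0.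
have h0' : (dl.-1)%:R * a 1%N < a 0%N by [].
have D1 : forall i j, (1 <= i)%N -> (i <= j)%N -> (j < d)%N -> a j <= a i.
  move=> i j i1 ij jd; case: (leqP dl j) => hj.
    by rewrite aZ ?modn_small.
  have H : forall n, (i + n < dl)%N -> a (i + n)%N <= a i.
    elim=> [|n IH] h; first by rewrite addn0.
    apply: le_trans (IH _); last by lia.
    rewrite addnS; apply: hmono; lia.
  by have := H (j - i)%N; rewrite subnKC //; apply; lia.
have D2 : a 1%N <= a 0%N.
  case: (leqP 2 dl) => hdl.
    apply: le_trans (ltW h0'); apply: ler_peMl => //; rewrite ler1n; lia.
  case: (leqP 2 d) => hd2.
    by rewrite aZ ?modn_small //; lia.
  by rewrite amod; have -> : d = 1%N by lia.
have D3 : forall i, (i < dl)%N -> 0 < a i.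
  case=> [_|i hi]; first by apply: le_lt_trans h0'; rewrite mulr_ge0 ?ler0n.
  by apply: lt_le_trans hlast _; apply: D1; lia.
have nw : forall e, `|omega d ^+ e| = 1.
  by move=> e; rewrite normrX (norm_unity d0 (prim_expr_order (omega_prim d0))) expr1n.
rewrite /mu2_term (dft_id d0) normrM normr_nat pmulr_rgt0 ?ltr0n // normr_gt0.
have [hq HQ] := modz_abs d0 (k'%:Z - (dl.-1)%:Z).
move: hq HQ; set Q := absz _ => hq HQ.
set P := absz (p %% d)%Z.
have xn : forall k : 'I_d, `|m k * (m (omod d0 (Q + k)))^* * omega d ^+ (d.-1 * P * ((Q + k) %% d))|
   = a k * a (Q + k)%N by move=> k; rewrite !normrM norm_conjC nw mulr1 aE aO.
case: (leqP dl.-1 k') => hk.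
  have eQ : Q = (k' - dl.-1)%N.
    apply/eqP; rewrite -eqz_nat -hq subzn // modz_nat modn_small //; lia.
  apply: (@sum_ne0 _ dl _ (a 1%N * a Q) (Ordinal d0)) => //.
  - by rewrite mulr_ge0.
  - rewrite xn /= addn0 mulrA ltr_pM2r //; apply: D3; lia.
  move=> k hk0; rewrite xn; have k1 : (1 <= k)%N.
    by rewrite lt0n; apply: contra hk0 => /eqP h; apply/eqP/val_inj.
  case: ifP => hkd; last by rewrite aZ ?mul0r // modn_small //; lia.
  apply: ler_pM => //; first by apply: D1 => //.
  have [Q0|Qp] := posnP Q; first by rewrite Q0 add0n; apply: le_trans D2; apply: D1.
  by apply: D1; lia.
set r := (dl.-1 - k')%N.
have eQ : Q = (d - r)%N.
  apply/eqP; rewrite -eqz_nat -hq -modzDr.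
  have -> : k'%:Z - (dl.-1)%:Z + d%:Z = (d - r)%N%:Z by rewrite /r; lia.
  by rewrite modz_nat modn_small //; lia.
have rd : (r < d)%N by lia.
apply: (@sum_ne0 _ dl _ (a r * a 1%N) (Ordinal rd)) => //.
- by rewrite /= /r; lia.
- by rewrite mulr_ge0.
- rewrite xn /= eQ subnK; last by lia.
  rewrite [a d]amod modnn mulrCA ltr_pM2l //; apply: D3; rewrite /r; lia.
move=> k hkr; rewrite xn eQ.
have kr : (nat_of_ord k != r)%N by apply: contra hkr => /eqP h; apply/eqP/val_inj.
case: ifP => hkd; last by rewrite aZ ?mul0r // modn_small //; lia.
case: (ltnP k r) => hkr'.
  rewrite [a (_ + _)%N]aZ ?mulr0 ?mulr_ge0 //.
  rewrite modn_small; lia.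
rewrite [a (_ + _)%N]amod (_ : (d - r + k = (k - r) + d)%N); last by rewrite /r; lia.
rewrite modnDr modn_small; last by lia.
apply: ler_pM => //; apply: D1; lia.
Qed.

Lemma min_pos (x y : algC) : 0 < x -> 0 < y -> 0 < Num.min x y.
Proof. by move=> hx hy; rewrite /Num.min /Order.min; case: ifP. Qed.

Unset Implicit Arguments.

Theorem mainTheorem9 (d delta gamma : nat) (m : vec d) :
  (forall i : 'I_d, (delta <= i)%N -> m i = 0) ->
  (delta.*2.-1 <= d)%N ->
  (1 <= gamma)%N -> (gamma <= delta.*2.-1)%N ->
  `|vget m 0| > (delta.-1)%:R * `|vget m 1| ->
  (forall j : nat, (1 <= j)%N -> (j.+1 <= delta.-1)%N ->
      `|vget m j.+1%:Z| <= `|vget m j%:Z|) ->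
  `|vget m (delta.-1)%:Z| > 0 ->
  mu2 delta gamma m > 0.
Proof.
move=> hsupp hd hg1 hg2 h0 hmono hlast.
have dl1 : (1 <= delta)%N by lia.
have d0 : (0 < d)%N by lia.
have C : forall p k', (k' <= (delta.-1).*2)%N -> 0 < mu2_term m p (k'%:Z - (delta.-1)%:Z).
  by move=> p k' hk; apply: (core p d0 dl1 hd hk hsupp h0 hmono hlast).
have seed : 0 < mu2_term m 0 0.
  by have := C 0 delta.-1 ltac:(lia); rewrite subrr.
rewrite /mu2; apply: (big_ind (fun x => 0 < x)) => //; first exact: min_pos.
move=> p _; rewrite big_seq; apply: (big_ind (fun x => 0 < x)) => //; first exact: min_pos.
move=> q /mapP [k hk ->]; apply: C; move: hk; rewrite mem_iota; lia.
Qed.
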